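(* Let $\mathsf{M}$ be the subspace of $\ell_1$ with underlying set $\{x \in \prod_{i\in\mathbb{N}} M_i : \sum_{i} |x(i)| < \infty\}$, where $M_i = \{ j\cdot 2^{-i} \mid j \in \{0,\dots,2^i\}\}$. Let $(x_n)_n$ be a sequence in $\mathsf{M}$ and $x_\infty\in\mathsf{M}$. Then $(x_n)_n$ converges in $\mathsf{M}$ to $x_\infty$ if and only if both of the following hold: (a) for every $i\in\mathbb{N}$ there is $n_i\in\mathbb{N}$ with $x_n(i)=x_\infty(i)$ for all $n\ge n_i$; (b) the sequence $(\|x_n\|_1)_n$ converges to $\|x_\infty\|_1$ in $\mathbb{R}$.
   Context: $\ell_1$ is the set of real sequences $x$ with $\|x\|_1=\sum_{i}|x(i)|<\infty$, topologised by the metric $\|x-y\|_1$; $\mathsf{M}$ carries the subspace topology. *)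

(* Defs.v *)
From HB Require Import structures.
From mathcomp Require Import all_boot all_order all_algebra.
From mathcomp Require Import all_classical all_reals all_analysis.
Set Implicit Arguments. Unset Strict Implicit. Unset Printing Implicit Defensive.
Import Order.TTheory GRing.Theory Num.Theory numFieldNormedType.Exports.
Local Open Scope ring_scope.
Local Open Scope classical_set_scope.

Definition in_l1 {R : realType} (x : nat -> R) : Prop :=
  cvgn (series (fun i => `|x i|)).

Definition l1norm {R : realType} (x : nat -> R) : R :=
  limn (series (fun i => `|x i|)).

Definition Mi {R : realType} (i : nat) : set R :=
  [set r | exists2 j : nat, (j <= 2 ^ i)%N & r = j%:R / 2%:R ^+ i].

Definition inM {R : realType} (x : nat -> R) : Prop :=
  (forall i, Mi i (x i)) /\ in_l1 x.

(* convergence in M (subspace topology of the metric ||x - y||_1) *)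
Definition conv_in_M {R : realType} (xs : nat -> nat -> R) (xinf : nat -> R) : Prop :=
  (fun n => l1norm (fun i => xs n i - xinf i)) @ \oo --> (0:R)%R.

(* Main.v *)
Require Import Defs.
From HB Require Import structures.
From mathcomp Require Import all_boot all_order all_algebra.
From mathcomp Require Import all_classical all_reals all_analysis.
From mathcomp Require Import lra.
Import Order.TTheory GRing.Theory Num.Theory numFieldNormedType.Exports.
Local Open Scope ring_scope.
Local Open Scope classical_set_scope.

Lemma ser_nd (R : realType) (a : nat -> R) : (forall i, 0 <= a i) -> nondecreasing_seq (series a).
Proof. move=> h; apply: nondecreasing_series => n _ _; exact: h. Qed.

Lemma ser_le_lim (R : realType) (a : nat -> R) : (forall i, 0 <= a i) -> cvgn (series a) ->
  forall n, series a n <= limn (series a).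
Proof. by move=> h c; apply: nondecreasing_cvgn_le => //; apply: ser_nd. Qed.

Lemma ser_bound (R : realType) (a : nat -> R) B : (forall i, 0 <= a i) ->
  (forall n, series a n <= B) -> cvgn (series a) /\ limn (series a) <= B.
Proof.
move=> h hB.
have c : cvgn (series a).
  apply: nondecreasing_is_cvgn; first exact: ser_nd.
  by exists B => _ [n _ <-].
split => //; apply: limr_le => //; exact: nearW.
Qed.

Lemma ser_ge0 (R : realType) (a : nat -> R) : (forall i, 0 <= a i) -> cvgn (series a) ->
  0 <= limn (series a).
Proof.
move=> h c; apply: limr_ge => //; apply: nearW => n.
rewrite /series /=; apply: sumr_ge0 => *; exact: h.
Qed.

Lemma ser_term (R : realType) (a : nat -> R) i : (forall i, 0 <= a i) -> a i <= series a i.+1.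
Proof.
move=> h; rewrite /series /= big_nat_recr //=; apply: ler_wpDl => //.
apply: sumr_ge0 => *; exact: h.
Qed.

Lemma ser_lim (R : realType) (a : nat -> R) : cvgn (series a) -> series a @ \oo --> limn (series a).
Proof. move=> c. exact: c. Qed.

Lemma ev (P : nat -> Prop) : (\forall n \near \oo, P n) -> exists N, forall n, (N <= n)%N -> P n.
Proof. by move=> [N _ HN]; exists N. Qed.
Lemma ev2 (P : nat -> Prop) N : (forall n, (N <= n)%N -> P n) -> \forall n \near \oo, P n.
Proof. by move=> H; exists N. Qed.


Lemma l1_diff (R : realType) (x y : nat -> R) : in_l1 x -> in_l1 y ->
  in_l1 (fun i => x i - y i) /\ l1norm (fun i => x i - y i) <= l1norm x + l1norm y.
Proof.
move=> hx hy; apply: ser_bound => // n.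
apply: (@le_trans _ _ (series (fun i => `|x i|) n + series (fun i => `|y i|) n)).
  rewrite /series /= -big_split /=; apply: ler_sum => i _; exact: ler_normB.
by apply: lerD; apply: ser_le_lim.
Qed.

Lemma l1_tri (R : realType) (x y : nat -> R) : in_l1 (fun i => x i - y i) -> in_l1 y ->
  l1norm x <= l1norm (fun i => x i - y i) + l1norm y.
Proof.
move=> hd hy; apply: (proj2 (@ser_bound _ (fun i => `|x i|) _ _ _)) => // n.
apply: (@le_trans _ _ (series (fun i => `|x i - y i|) n + series (fun i => `|y i|) n)).
  rewrite /series /= -big_split /=; apply: ler_sum => i _.
  by rewrite (le_trans _ (ler_normD _ _)) // subrK.
by apply: lerD; apply: ser_le_lim.
Qed.

Lemma l1_term (R : realType) (x : nat -> R) i : in_l1 x -> `|x i| <= l1norm x.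
Proof.
move=> h; apply: (le_trans (@ser_term _ (fun i => `|x i|) i _)) => //; exact: ser_le_lim.
Qed.

Lemma Mi_eq (R : realType) i (a b : R) : Mi i a -> Mi i b -> `|a - b| < (2%:R ^+ i)^-1 -> a = b.
Proof.
move=> [j _ ->] [k _ ->].
have p0 : 0 < (2%:R : R) ^+ i by rewrite exprn_gt0.
rewrite -mulrBl normrM (gtr0_norm (x := _^-1)) ?invr_gt0 //.
rewrite -{2}(mul1r (_^-1)) ltr_pM2r ?invr_gt0 // ltr_norml => /andP [h1 h2].
have [jk|kj|->] := ltngtP j k; last by [].
- have : (j.+1 <= k)%N by [].
  rewrite -(ler_nat R) -natr1 => h3. exfalso. lra.
- have : (k.+1 <= j)%N by [].
  rewrite -(ler_nat R) -natr1 => h3. exfalso. lra.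
Qed.

Lemma l1_swap (R : realType) (x y : nat -> R) :
  l1norm (fun i => y i - x i) = l1norm (fun i => x i - y i).
Proof.
rewrite /l1norm; congr (limn (series _)); apply: funext => i; exact: distrC.
Qed.

Theorem lemma3p1 (R : realType) (xs : nat -> nat -> R) (xinf : nat -> R)
  (hxs : forall n, inM (xs n)) (hxinf : inM xinf) :
  conv_in_M xs xinf <->
  ((forall i : nat, exists ni : nat, forall n : nat, (ni <= n)%N -> xs n i = xinf i) /\
   (fun n => l1norm (xs n)) @ \oo --> l1norm xinf).
Proof.
have Hd n := @l1_diff R _ _ (hxs n).2 hxinf.2.
have Hd0 n : 0 <= l1norm (fun i => xs n i - xinf i).
  by apply: ser_ge0 => //; exact: (Hd n).1.
split.
  rewrite /conv_in_M => /cvgrPdist_lt Hc; split.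
    move=> i.
    have p0 : 0 < ((2%:R : R) ^+ i)^-1 by rewrite invr_gt0 exprn_gt0.
    have [N HN] := @ev _ (Hc _ p0); exists N => n hn.
    apply: (@Mi_eq R i _ _ ((hxs n).1 i) (hxinf.1 i)).
    apply: (le_lt_trans (@l1_term R _ i (Hd n).1)).
    by have := HN n hn; rewrite sub0r normrN ger0_norm.
  apply/cvgrPdist_lt => e e0; apply: filterS (Hc e e0) => n.
  rewrite sub0r normrN ger0_norm // => h; apply: le_lt_trans h.
  have h1 := @l1_tri R _ _ (Hd n).1 hxinf.2.
  have hd' : in_l1 (fun i => xinf i - xs n i).
    rewrite /in_l1; have -> : (fun i => `|xinf i - xs n i|) = (fun i => `|xs n i - xinf i|).
      by apply: funext => i; exact: distrC.
    exact: (Hd n).1.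
  have h2 := @l1_tri R _ _ hd' (hxs n).2.
  rewrite l1_swap in h2.
  rewrite ler_norml; apply/andP; split; lra.
move=> [Ha Hb].
apply/cvgrPdist_lt => e e0.
have q0 : 0 < e / 4%:R by rewrite divr_gt0.
have [N HN] := @ev _ ((proj1 (cvgrPdist_lt _ _) (@ser_lim R _ hxinf.2)) _ q0).
have [M HM] : exists M, forall n, (M <= n)%N -> forall i, (i < N)%N -> xs n i = xinf i.
  clear HN; elim: N => [|N [M HM]]; first by exists 0%N.
  have [m Hm] := Ha N; exists (maxn M m) => n; rewrite geq_max => /andP [h1 h2] i.
  rewrite ltnS leq_eqVlt => /orP [/eqP -> | hi]; [exact: Hm | exact: HM].
have [M2 HM2] := @ev _ ((proj1 (cvgrPdist_lt _ _) Hb) _ q0).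
apply: (@ev2 _ (maxn M M2)) => n; rewrite geq_max => /andP [h1 h2].
rewrite sub0r normrN ger0_norm //.
have hN := HN N (leqnn N).
have hn := HM2 n h2.
set SN := series (fun i => `|xinf i|) N.
have key : l1norm (fun i => xs n i - xinf i) <= (l1norm (xs n) - SN) + (l1norm xinf - SN).
  apply: (proj2 (@ser_bound _ (fun i => `|xs n i - xinf i|) _ _ _)) => // K.
  apply: (@le_trans _ _ (series (fun i => `|xs n i - xinf i|) (maxn K N))).
    by apply: ser_nd => //; exact: leq_maxl.
  have NK : (N <= maxn K N)%N by exact: leq_maxr.
  set K' := maxn K N.
  have eA : series (fun i => `|xs n i|) K' =
     series (fun i => `|xs n i|) N + \sum_(N <= i < K') `|xs n i|.
    by rewrite /series /= (big_cat_nat (leq0n N) NK).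
  have eB : series (fun i => `|xinf i|) K' = SN + \sum_(N <= i < K') `|xinf i|.
    by rewrite /SN /series /= (big_cat_nat (leq0n N) NK).
  have eC : series (fun i => `|xs n i|) N = SN.
    rewrite /SN /series /=; apply: eq_big_nat => i /andP [_ hi].
    by rewrite (HM n h1 i hi).
  have lA := @ser_le_lim R _ (fun i => normr_ge0 (xs n i)) (hxs n).2 K'.
  have lB := @ser_le_lim R _ (fun i => normr_ge0 (xinf i)) hxinf.2 K'.
  have eD : series (fun i => `|xs n i - xinf i|) K' =
      \sum_(N <= i < K') `|xs n i - xinf i|.
    rewrite /series /= (big_cat_nat (leq0n N) NK) /=.
    rewrite big_nat_cond big1 ?add0r // => i /andP [/andP [_ hi] _].
    by rewrite (HM n h1 i hi) subrr normr0.
  have lD : \sum_(N <= i < K') `|xs n i - xinf i| <=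
      \sum_(N <= i < K') `|xs n i| + \sum_(N <= i < K') `|xinf i|.
    rewrite -big_split; apply: ler_sum => i _; exact: ler_normB.
  rewrite eD; rewrite eC in eA.
  rewrite /l1norm. lra.
move: hN hn; rewrite /l1norm -/SN => hN hn.
rewrite ltr_norml in hN; rewrite ltr_norml in hn.
move: key; rewrite /l1norm => key.
lra.
Qed.
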